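(* Consider the algorithm described in the context, and suppose it does not terminate finitely. If $k\in\mathbb{N}$ satisfies $$(1-\eta)\Delta q_k(s_k,\tau_k)\ge \tfrac12\Big(-\frac{\tau_k}{\alpha_k}+\tau_kL_g+L_J\Big)\|s_k\|_2^2,$$ then $k\in\mathcal S$, i.e., iteration $k$ is successful ($x_{k+1}=x_k+s_k$).
   Context: Problem: $\min_{x\in\mathbb{R}^n} f(x)+r(x)$ subject to $c(x)=0$, where $f:\mathbb{R}^n\to\mathbb{R}$ and $c:\mathbb{R}^n\to\mathbb{R}^m$ ($m\le n$) are continuously differentiable and $r:\mathbb{R}^n\to\mathbb{R}_{\ge 0}$ is convex. Write $g(x)=\nabla f(x)$, $J(x)=\nabla c(x)^T$, and $f_k=f(x_k)$, $g_k=g(x_k)$, $c_k=c(x_k)$, $J_k=J(x_k)$, $r_k=r(x_k)$. All norms are Euclidean. Merit function: $\Phi_\tau(x)=\tau(f(x)+r(x))+\|c(x)\|_2$. Algorithm: inputs $x_0$, $\alpha_0>0$, $\tau_{-1}>0$; constants $\kappa_v>0$, $\sigma_c,\epsilon_\tau,\xi,\eta\in(0,1)$, $\sigma_u\in(0,1/2]$, $\bar\sigma_u:=\sigma_u+\tfrac12$. For $k=0,1,\dots$: 1. If $J_k^Tc_k\ne0$, compute $v_k$ with $v_k\in\mathrm{Range}(J_k^T)$, $\|v_k\|_2\le\kappa_v\alpha_k\|J_k^Tc_k\|_2$, $\|c_k+J_kv_k\|_2\le\|c_k+J_kv_k^c\|_2$, where $v_k^c=-\beta_k^cJ_k^Tc_k$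 with $\beta_k^c$ minimizing $\tfrac12\|c_k-\beta J_kJ_k^Tc_k\|_2^2$ over $0\le\beta\le\kappa_v\alpha_k$. Otherwise set $v_k=0$, and if $c_k\ne0$ terminate. 2. Let $u_k$ be the unique minimizer of $g_k^Tu+\tfrac1{2\alpha_k}\|u\|_2^2+r(x_k+v_k+u)$ subject to $J_ku=0$; set $s_k=v_k+u_k$. If $s_k=0$, terminate. 3. Let $D_k:=g_k^Ts_k+\bar\sigma_u\|s_k\|_2^2/\alpha_k+r(x_k+s_k)-r_k$; $\tau_{k,\mathrm{trial}}=\infty$ if $D_k\le0$, else $\tau_{k,\mathrm{trial}}=(1-\sigma_c)(\|c_k\|_2-\|c_k+J_kv_k\|_2)/D_k$. Set $\tau_k=\tau_{k-1}$ if $\tau_{k-1}\le\tau_{k,\mathrm{trial}}$, else $\tau_k=\min\{(1-\epsilon_\tau)\tau_{k-1},\tau_{k,\mathrm{trial}}\}$. 4. With $\Delta q_k(s,\tau):=-\tau(g_k^Ts+\tfrac1{2\alpha_k}\|s\|_2^2+r(x_k+s)-r_k)+\|c_k\|_2-\|c_k+J_ks\|_2$: if $\Phi_{\tau_k}(x_k+s_k)\le\Phi_{\tau_k}(x_k)-\eta\Delta q_k(s_k,\tau_k)$ set $x_{k+1}=x_k+s_k$, $\alpha_{k+1}=\alpha_k$ (iteration $k$ is then called successful, and $\mathcal S$ denotes the set of successful iterations); else $x_{k+1}=x_k$, $\alpha_{k+1}=\xi\alpha_k$. Standing assumption: there is an open convex set $\mathcal X$ containing all iterates $x_k$ and trial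 points $x_k+s_k$ such that $f$ is bounded below on $\mathcal X$, $\nabla f$ is bounded on $\mathcal X$ and Lipschitz continuous on $\mathcal X$ with constant $L_g>0$, $c$ is bounded on $\mathcal X$, $J$ is bounded on $\mathcal X$ and Lipschitz continuous on $\mathcal X$ with constant $L_J>0$, and all subgradients of $r$ at points of $\mathcal X$ are uniformly bounded in norm. *)

(* Defs.v *)
From HB Require Import structures.
From mathcomp Require Import all_boot all_order all_algebra.
From mathcomp Require Import all_classical all_reals all_analysis.
Set Implicit Arguments. Unset Strict Implicit. Unset Printing Implicit Defensive.
Import Order.TTheory GRing.Theory Num.Theory.
Import numFieldNormedType.Exports.
Local Open Scope classical_set_scope.
Local Open Scope ring_scope.

Section Defs.
Variable R : realType.

Definition dot {n : nat} (u v : 'cV[R]_n) : R := \sum_(i < n) u i 0 * v i 0.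
Definition norm2 {n : nat} (v : 'cV[R]_n) : R := Num.sqrt (dot v v).

Definition convex_set {n : nat} (X : set 'cV[R]_n) : Prop :=
  forall x y (t : R), X x -> X y -> 0 <= t <= 1 -> X (t *: x + (1 - t) *: y).
Definition convex_fun {n : nat} (r : 'cV[R]_n -> R) : Prop :=
  forall x y (t : R), 0 <= t <= 1 ->
    r (t *: x + (1 - t) *: y) <= t * r x + (1 - t) * r y.

Definition is_subgrad {n : nat} (r : 'cV[R]_n -> R) (x z : 'cV[R]_n) : Prop :=
  forall y, r x + dot z (y - x) <= r y.

Definition C1_grad {n : nat} (f : 'cV[R]_n -> R) (g : 'cV[R]_n -> 'cV[R]_n) :=
  continuous g /\
  forall x, differentiable f x /\ forall h, 'd f x h = dot (g x) h.

Definition C1_jac {n m : nat} (c : 'cV[R]_n -> 'cV[R]_m)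
    (J : 'cV[R]_n -> 'M[R]_(m, n)) :=
  continuous J /\
  forall x, differentiable c x /\ forall h, 'd c x h = J x *m h.

Definition merit {n m : nat} (f : 'cV[R]_n -> R) (r : 'cV[R]_n -> R)
    (c : 'cV[R]_n -> 'cV[R]_m) (tau : R) (x : 'cV[R]_n) : R :=
  tau * (f x + r x) + norm2 (c x).

(* tau_{k-1}, with tau_{-1} = taum1 *)
Definition tau_prev (taum1 : R) (tau : nat -> R) (k : nat) : R :=
  if k is k'.+1 then tau k' else taum1.

Definition standing_assumption {n m : nat} (X : set 'cV[R]_n)
    (f : 'cV[R]_n -> R) (g : 'cV[R]_n -> 'cV[R]_n)
    (c : 'cV[R]_n -> 'cV[R]_m) (J : 'cV[R]_n -> 'M[R]_(m, n))
    (r : 'cV[R]_n -> R) (Lg LJ : R) : Prop :=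
  open X /\ convex_set X /\
  (exists lb, forall x, X x -> lb <= f x) /\
  (exists B, forall x, X x -> norm2 (g x) <= B) /\
  0 < Lg /\ (forall x y, X x -> X y -> norm2 (g x - g y) <= Lg * norm2 (x - y)) /\
  (exists B, forall x, X x -> norm2 (c x) <= B) /\
  (* ||J(x)||_2 (induced 2-norm) bounded on X, written out *)
  (exists B, forall x, X x -> forall h, norm2 (J x *m h) <= B * norm2 h) /\
  (* ||J(x) - J(y)||_2 <= LJ ||x - y||_2 (induced 2-norm), written out *)
  0 < LJ /\ (forall x y, X x -> X y -> forall h,
               norm2 ((J x - J y) *m h) <= LJ * norm2 (x - y) * norm2 h) /\
  (exists B, forall x z, X x -> is_subgrad r x z -> norm2 z <= B).

Definition Delta_q {n m : nat} (g : 'cV[R]_n) (cx : 'cV[R]_m) (Jx : 'M[R]_(m, n))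
    (r : 'cV[R]_n -> R) (x : 'cV[R]_n) (alpha tau : R) (s : 'cV[R]_n) : R :=
  - tau * (dot g s + (2 * alpha)^-1 * norm2 s ^+ 2 + r (x + s) - r x)
  + norm2 cx - norm2 (cx + Jx *m s).

(* The iterates (x, alpha, tau, v, u, s) are generated by the algorithm,
   which does not terminate finitely. *)
Definition algorithm_run {n m : nat}
    (f : 'cV[R]_n -> R) (g : 'cV[R]_n -> 'cV[R]_n)
    (c : 'cV[R]_n -> 'cV[R]_m) (J : 'cV[R]_n -> 'M[R]_(m, n))
    (r : 'cV[R]_n -> R)
    (kappa_v sigma_c eps_tau xi eta sigma_u taum1 : R)
    (x : nat -> 'cV[R]_n) (alpha tau : nat -> R)
    (v u s : nat -> 'cV[R]_n) : Prop :=
  forall k : nat,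
  let xk := x k in let gk := g xk in let ck := c xk in let Jk := J xk in
  let JTc := (Jk)^T *m ck in
  (* Step 1 (and no termination in Step 1) *)
  (JTc != 0 ->
     (exists w : 'cV[R]_m, v k = (Jk)^T *m w) /\
     norm2 (v k) <= kappa_v * alpha k * norm2 JTc /\
     exists beta : R,
       0 <= beta <= kappa_v * alpha k /\
       (forall b, 0 <= b <= kappa_v * alpha k ->
          2^-1 * norm2 (ck - beta *: (Jk *m JTc)) ^+ 2
          <= 2^-1 * norm2 (ck - b *: (Jk *m JTc)) ^+ 2) /\
       norm2 (ck + Jk *m v k) <= norm2 (ck + Jk *m (- beta *: JTc))) /\
  (JTc = 0 -> v k = 0 /\ ck = 0) /\
  (let obj := fun w : 'cV[R]_n =>
       dot gk w + (2 * alpha k)^-1 * norm2 w ^+ 2 + r (xk + v k + w) in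
   Jk *m u k = 0 /\
   (forall w, Jk *m w = 0 -> obj (u k) <= obj w) /\
   (forall w, Jk *m w = 0 -> (forall w', Jk *m w' = 0 -> obj w <= obj w') ->
      w = u k)) /\
  s k = v k + u k /\ s k != 0 /\
  (let Dk := dot gk (s k) + (sigma_u + 2^-1) * norm2 (s k) ^+ 2 / alpha k
             + r (xk + s k) - r xk in
   let tp := tau_prev taum1 tau k in
   if Dk <= 0 then tau k = tp
   else let ttrial := (1 - sigma_c) * (norm2 ck - norm2 (ck + Jk *m v k)) / Dk in
        tau k = if tp <= ttrial then tp else Num.min ((1 - eps_tau) * tp) ttrial) /\
  (if merit f r c (tau k) (xk + s k) <=
        merit f r c (tau k) xk - eta * Delta_q gk ck Jk r xk (alpha k) (tau k) (s k)
   then x k.+1 = xk + s k /\ alpha k.+1 = alpha k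
   else x k.+1 = xk /\ alpha k.+1 = xi * alpha k).

Definition successful {n m : nat}
    (f : 'cV[R]_n -> R) (g : 'cV[R]_n -> 'cV[R]_n)
    (c : 'cV[R]_n -> 'cV[R]_m) (J : 'cV[R]_n -> 'M[R]_(m, n))
    (r : 'cV[R]_n -> R) (eta : R)
    (x : nat -> 'cV[R]_n) (alpha tau : nat -> R) (s : nat -> 'cV[R]_n) (k : nat) : Prop :=
  merit f r c (tau k) (x k + s k) <=
    merit f r c (tau k) (x k)
    - eta * Delta_q (g (x k)) (c (x k)) (J (x k)) r (x k) (alpha k) (tau k) (s k).

End Defs.

(* Main.v *)
Require Import Defs.
From HB Require Import structures.
From mathcomp Require Import all_boot all_order all_algebra.
From mathcomp Require Import all_classical all_reals all_analysis.
From mathcomp Require Import ring lra.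
Import Order.TTheory GRing.Theory Num.Theory.
Import numFieldNormedType.Exports.
Local Open Scope classical_set_scope.
Local Open Scope ring_scope.

Section Dot.
Variable R : realType.
Variable n : nat.
Implicit Types u v w : 'cV[R]_n.

Lemma dotC u v : dot u v = dot v u.
Proof. by apply: eq_bigr => i _; rewrite mulrC. Qed.
Lemma dotDl u v w : dot (u + v) w = dot u w + dot v w.
Proof. by rewrite /dot -big_split; apply: eq_bigr => i _; rewrite !mxE mulrDl. Qed.
Lemma dotZl a u v : dot (a *: u) v = a * dot u v.
Proof. by rewrite /dot mulr_sumr; apply: eq_bigr => i _; rewrite !mxE mulrA. Qed.
Lemma dotNl u v : dot (- u) v = - dot u v.
Proof. by rewrite -scaleN1r dotZl mulN1r. Qed.
Lemma dotBl u v w : dot (u - v) w = dot u w - dot v w.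
Proof. by rewrite dotDl dotNl. Qed.
Lemma dotDr u v w : dot w (u + v) = dot w u + dot w v.
Proof. by rewrite dotC dotDl !(dotC w). Qed.
Lemma dotZr a u v : dot v (a *: u) = a * dot v u.
Proof. by rewrite dotC dotZl dotC. Qed.
Lemma dotBr u v w : dot w (u - v) = dot w u - dot w v.
Proof. by rewrite dotC dotBl !(dotC w). Qed.
Lemma dot0l v : dot 0 v = 0.
Proof. by rewrite -(scale0r 0) dotZl mul0r. Qed.
Lemma dot_ge0 v : 0 <= dot v v.
Proof. by apply: sumr_ge0 => i _; rewrite -expr2 sqr_ge0. Qed.
Lemma dot_eq0 v : dot v v = 0 -> v = 0.
Proof.
move=> /eqP; rewrite psumr_eq0; last by move=> i _; rewrite -expr2 sqr_ge0.
move=> /allP H; apply/matrixP => i j; rewrite ord1 mxE.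
by have /(_ (mem_index_enum i)) := H i; rewrite -expr2 sqrf_eq0 => /eqP.
Qed.
Lemma norm2_ge0 v : 0 <= norm2 v.
Proof. exact: sqrtr_ge0. Qed.
Lemma norm2_sq v : norm2 v ^+ 2 = dot v v.
Proof. by rewrite sqr_sqrtr // dot_ge0. Qed.
Lemma norm2_eq0 v : norm2 v = 0 -> v = 0.
Proof. by move=> H; apply: dot_eq0; rewrite -norm2_sq H expr0n. Qed.
Lemma norm20 : norm2 (0 : 'cV[R]_n) = 0.
Proof. by rewrite /norm2 dot0l sqrtr0. Qed.

Lemma CS u v : dot u v <= norm2 u * norm2 v.
Proof.
have [->|u0] := eqVneq u 0; first by rewrite dot0l norm20 mul0r.
have [->|v0] := eqVneq v 0; first by rewrite dotC dot0l norm20 mulr0.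
have a0 : 0 < norm2 u by rewrite lt_def norm2_ge0 andbT; apply/eqP => /norm2_eq0 /eqP; rewrite (negPf u0).
have b0 : 0 < norm2 v by rewrite lt_def norm2_ge0 andbT; apply/eqP => /norm2_eq0 /eqP; rewrite (negPf v0).
have := dot_ge0 (norm2 v *: u - norm2 u *: v).
rewrite !dotBl !dotBr !dotZl !dotZr -!norm2_sq (dotC v u).
set a := norm2 u; set b := norm2 v; set d := dot u v => H.
have ab : 0 < a * b by rewrite mulr_gt0.
nra.
Qed.

Lemma norm2Z a v : norm2 (a *: v) = `|a| * norm2 v.
Proof.
rewrite /norm2 dotZl dotZr mulrA -expr2 sqrtrM ?sqr_ge0 //.
by rewrite sqrtr_sqr.
Qed.

Lemma norm2N v : norm2 (- v) = norm2 v.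
Proof. by rewrite -scaleN1r norm2Z normrN normr1 mul1r. Qed.

Lemma norm2D u v : norm2 (u + v) <= norm2 u + norm2 v.
Proof.
rewrite -(ler_pXn2r (isT : (0 < 2)%N)) ?nnegrE ?addr_ge0 ?norm2_ge0 //.
rewrite norm2_sq dotDl !dotDr (dotC v u) sqrrD -!norm2_sq.
have := CS u v; have := norm2_ge0 u; have := norm2_ge0 v; nra.
Qed.

Lemma norm2_sub u v : norm2 u - norm2 v <= norm2 (u - v).
Proof. have := norm2D (u - v) v; rewrite subrK; lra. Qed.
End Dot.

Section MV.
Variable R : realType.
Variable n : nat.

Lemma line_deriv (F : 'cV[R]_n -> R) x s t :
  differentiable F (x + t *: s) ->
  is_derive t 1 (fun u : R => F (x + u *: s)) ('d F (x + t *: s) s).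
Proof.
move=> dF.
have E : (fun h : R => h^-1 *: (((fun u => F (x + u *: s)) \o shift t) (h *: 1) - (fun u => F (x + u *: s)) t)) = (fun h => h^-1 *: ((F \o shift (x + t *: s)) (h *: s) - F (x + t *: s))).
  by apply/funext => h /=; rewrite [h *: 1]mulr1 scalerDl addrCA.
have Hd : derivable F (x + t*:s) s by apply: diff_derivable.
apply: DeriveDef; first by rewrite /derivable E.
by rewrite /derive E; exact: deriveE.
Qed.

Lemma mv_bound (F : 'cV[R]_n -> R) (D : 'cV[R]_n -> 'cV[R]_n -> R) x s K :
  (forall y, differentiable F y /\ forall h, 'd F y h = D y h) ->
  (forall t, 0 <= t <= 1 -> D (x + t *: s) s - D x s <= K * t) ->
  F (x + s) - F x - D x s <= K / 2.
Proof.
move=> HF HD.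
pose G := fun u : R => F (x + u *: s).
pose a := D x s.
pose phi := G - a *: (id : R -> R) - (K / 2) *: ((id : R -> R) ^+ 2).
pose dphi := fun t : R => D (x + t *: s) s - a - K * t.
have Hphi (t : R) : is_derive t (1 : R) phi (dphi t).
  have HG : is_derive t (1:R) G (D (x + t *: s) s).
    by have [d1 d2] := HF (x + t *: s); rewrite -d2; exact: line_deriv.
  apply: is_derive_eq.
  have e1 (y : R) : y%:A = y by rewrite [y%:A]mulr1.
  have e2 (y z : R) : y *: z = y * z by [].
  by rewrite /dphi !e1 e2 /= expr1 -mulrA mulKf // pnatr_eq0.
have [c c01 Hc] : exists2 c, c \in `]0, 1[%R & phi 1 - phi 0 = dphi c * (1 - 0).
  apply: (@MVT _ phi dphi) => //.
  apply: derivable_within_continuous => t tI.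
  by have [] := Hphi t.
have E1 : phi 1 = F (x + 1 *: s) - a * 1 - K/2 * (1 * 1) by reflexivity.
have E0 : phi 0 = F (x + 0 *: s) - a * 0 - K/2 * (0 * 0) by reflexivity.
move: Hc; rewrite E1 E0 /dphi scale1r scale0r addr0 !mulr0 !mulr1 subr0 !subr0.
rewrite in_itv /= in c01.
have := HD c; rewrite ltW ?(andP c01).1 ?(andP c01).2 //= => H1 H2.
rewrite /a in H2 *; lra.
Qed.
End MV.

Section Desc.
Variable R : realType.

Lemma dot_diff m (w : 'cV[R]_m) z :
  differentiable (dot w) z /\ 'd (dot w) z = dot w :> (_ -> _).
Proof.
have E : dot w = \sum_(i < m) (fun v : 'cV[R]_m => w i 0 * v i 0).
  by apply/funext => v; rewrite fct_sumE.
have Hd y : differentiable (dot w) y.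
  rewrite E; apply: differentiable_sum => i.
  have -> : (fun v : 'cV[R]_m => w i 0 * v i 0) = w i 0 *: (fun v : 'cV[R]_m => v i 0).
    by apply/funext.
  apply: differentiableZ; exact: differentiable_coord.
have lin : linear (dot w : 'cV[R]_m -> R).
  by move=> a u v; rewrite dotDr dotZr.
pose lM := GRing.isLinear.Build _ _ _ _ _ lin.
pose L : {linear _ -> _} := HB.pack (dot w : 'cV[R]_m -> R) lM.
split; first exact: Hd.
have -> : dot w = L by [].
apply: diff_lin => y; exact: differentiable_continuous (Hd y).
Qed.

Lemma conv_pt n (X : set 'cV[R]_n) x s t :
  Defs.convex_set X -> X x -> X (x + s) -> 0 <= t <= 1 -> X (x + t *: s).
Proof.
move=> cX Xx Xxs t01.
have -> : x + t *: s = t *: (x + s) + (1 - t) *: x.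
  by apply/matrixP => i j; rewrite !mxE; ring.
exact: cX.
Qed.

Lemma descent_f n (f : 'cV[R]_n -> R) g X x s Lg :
  C1_grad f g -> Defs.convex_set X -> X x -> X (x + s) ->
  (forall y z, X y -> X z -> norm2 (g y - g z) <= Lg * norm2 (y - z)) ->
  f (x + s) - f x - dot (g x) s <= Lg * norm2 s ^+ 2 / 2.
Proof.
move=> [_ Hf] cX Xx Xxs HL.
apply: (@mv_bound R n f (fun y h => dot (g y) h)).
  by move=> y; have [d1 d2] := Hf y; split.
move=> t t01; rewrite -dotBl.
have Xt := conv_pt _ _ _ _ _ cX Xx Xxs t01.
apply: le_trans (CS _ _ _ _) _.
apply: le_trans (ler_wpM2r (norm2_ge0 _ _ s) (HL _ _ Xt Xx)) _.
rewrite addrAC subrr add0r norm2Z ger0_norm ?(andP t01).1 //.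
rewrite le_eqVlt; apply/orP; left; apply/eqP; ring.
Qed.

Lemma descent_c n m (c : 'cV[R]_n -> 'cV[R]_m) J X x s LJ :
  C1_jac c J -> Defs.convex_set X -> X x -> X (x + s) -> 0 <= LJ ->
  (forall y z, X y -> X z -> forall h,
     norm2 ((J y - J z) *m h) <= LJ * norm2 (y - z) * norm2 h) ->
  norm2 (c (x + s) - c x - J x *m s) <= LJ * norm2 s ^+ 2 / 2.
Proof.
move=> [_ Hc] cX Xx Xxs LJ0 HL.
set w := c (x + s) - c x - J x *m s.
have [w0|wpos] : norm2 w = 0 \/ 0 < norm2 w.
  by have := norm2_ge0 _ _ w; rewrite le_eqVlt => /orP [/eqP ->|->]; [left|right].
  rewrite w0; apply: mulr_ge0; last by rewrite invr_ge0.
  by apply: mulr_ge0 => //; apply: exprn_ge0; exact: norm2_ge0.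
have H := @mv_bound R n (fun y => dot w (c y)) (fun y h => dot w (J y *m h))
   x s (LJ * norm2 s ^+ 2 * norm2 w) _ _.
have H1 : dot w (c (x + s)) - dot w (c x) - dot w (J x *m s) = norm2 w ^+ 2.
  by rewrite norm2_sq /w !dotBr.
rewrite H1 in H.
suff : norm2 w ^+ 2 <= LJ * norm2 s ^+ 2 * norm2 w / 2.
  move=> H2; rewrite -(ler_pM2r wpos) -expr2; apply: le_trans H2 _.
  by rewrite expr2 le_eqVlt; apply/orP; left; apply/eqP; ring.
apply: H.
  move=> y; have [dd dl] := dot_diff _ w (c y); have [dc dcl] := Hc y.
  have -> : (fun y => dot w (c y)) = dot w \o c by [].
  split; first exact: differentiable_comp.
  by move=> h; rewrite (diff_comp dc dd) /= dl dcl.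
move=> t t01; rewrite -dotBr -mulmxBl.
have Xt := conv_pt _ _ _ _ _ cX Xx Xxs t01.
apply: le_trans (CS _ _ _ _) _.
apply: le_trans (ler_wpM2l (norm2_ge0 _ _ w) (HL _ _ Xt Xx s)) _.
rewrite addrAC subrr add0r norm2Z ger0_norm ?(andP t01).1 //.
rewrite le_eqVlt; apply/orP; left; apply/eqP; ring.
Qed.
End Desc.

Theorem lemma3p5 (R : realType) (n m : nat) (Hmn : (m <= n)%N)
    (f : 'cV[R]_n -> R) (g : 'cV[R]_n -> 'cV[R]_n)
    (c : 'cV[R]_n -> 'cV[R]_m) (J : 'cV[R]_n -> 'M[R]_(m, n))
    (r : 'cV[R]_n -> R)
    (Hf : C1_grad f g) (Hc : C1_jac c J)
    (Hr0 : forall y, 0 <= r y) (Hrc : convex_fun r)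
    (kappa_v sigma_c eps_tau xi eta sigma_u taum1 : R)
    (Hkappa : 0 < kappa_v) (Hsc : 0 < sigma_c < 1) (Het : 0 < eps_tau < 1)
    (Hxi : 0 < xi < 1) (Heta : 0 < eta < 1) (Hsu : 0 < sigma_u <= 2^-1)
    (Htaum1 : 0 < taum1)
    (x : nat -> 'cV[R]_n) (alpha tau : nat -> R) (v u s : nat -> 'cV[R]_n)
    (Halpha0 : 0 < alpha 0)
    (Hrun : algorithm_run f g c J r kappa_v sigma_c eps_tau xi eta sigma_u taum1
              x alpha tau v u s)
    (X : set 'cV[R]_n) (Lg LJ : R)
    (HX : forall k, X (x k) /\ X (x k + s k))
    (Hstand : standing_assumption X f g c J r Lg LJ)
    (k : nat)
    (Hk : (1 - eta) * Delta_q (g (x k)) (c (x k)) (J (x k)) r (x k) (alpha k) (tau k) (s k)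
          >= 2^-1 * (- tau k / alpha k + tau k * Lg + LJ) * norm2 (s k) ^+ 2) :
  successful f g c J r eta x alpha tau s k /\ x k.+1 = x k + s k.
Proof.
have tau_ge0 : forall j, 0 <= tau j.
  have step j : 0 <= tau_prev taum1 tau j -> 0 <= tau j.
    move=> Htp.
    have := Hrun j; cbv zeta.
    move=> [H1 [H2 [_ [_ [_ [H3 _]]]]]].
    have Hdiff : 0 <= norm2 (c (x j)) - norm2 (c (x j) + J (x j) *m v j).
      case: (eqVneq ((J (x j))^T *m c (x j)) 0) => [E|N].
        by have [-> _] := H2 E; rewrite mulmx0 addr0 subrr.
      have [_ [_ [beta [Hb [Hmin Hv]]]]] := H1 N.
      have Hk0 : 0 <= kappa_v * alpha j := le_trans (andP Hb).1 (andP Hb).2.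
      have H0 : (0:R) <= 0 <= kappa_v * alpha j by rewrite lexx Hk0.
      have Hm := Hmin 0 H0.
      rewrite scale0r subr0 in Hm.
      have Hm2 : norm2 (c (x j) - beta *: (J (x j) *m ((J (x j))^T *m c (x j)))) <= norm2 (c (x j)).
        rewrite -(ler_pXn2r (isT : (0 < 2)%N)) ?nnegrE ?norm2_ge0 //.
        by move: Hm; rewrite ler_pM2l ?invr_gt0 ?ltr0n.
      have E : c (x j) + J (x j) *m (- beta *: ((J (x j))^T *m c (x j)))
             = c (x j) - beta *: (J (x j) *m ((J (x j))^T *m c (x j))).
        by rewrite -scalemxAr scaleNr.
      rewrite E in Hv.
      rewrite subr_ge0; exact: le_trans Hv Hm2.
    move: H3; case: ifP => HD.
      by move=> ->.
    case: ifP => _ ->; first done.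
    rewrite le_min; apply/andP; split.
      apply: mulr_ge0 => //; rewrite subr_ge0; exact: ltW (andP Het).2.
    apply: divr_ge0.
      apply: mulr_ge0 => //; rewrite subr_ge0; exact: ltW (andP Hsc).2.
    by apply: ltW; rewrite ltNge HD.
  elim=> [|j IH]; first by apply: step; exact: ltW Htaum1.
  by apply: step.
have [Xx Xxs] := HX k.
move: Hstand => [_ [cX [_ [_ [Lg0 [HLg [_ [_ [LJ0 [HLJ _]]]]]]]]]].
have Af := @descent_f R n f g X (x k) (s k) Lg Hf cX Xx Xxs HLg.
have Ac := @descent_c R n m c J X (x k) (s k) LJ Hc cX Xx Xxs (ltW LJ0) HLJ.
have tk := tau_ge0 k.
have Hcn : norm2 (c (x k + s k)) <= norm2 (c (x k) + J (x k) *m s k) + LJ * norm2 (s k) ^+ 2 / 2.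
  have E : c (x k + s k) = (c (x k) + J (x k) *m s k) + (c (x k + s k) - c (x k) - J (x k) *m s k).
    by apply/matrixP => i j; rewrite !mxE; ring.
  rewrite {1}E; apply: le_trans (norm2D _ _ _ _) _; lra.
have Hsucc : successful f g c J r eta x alpha tau s k.
  rewrite /successful /merit /Delta_q.
  have Af' := ler_wpM2l tk Af.
  have ia : (2 * alpha k)^-1 = 2^-1 * (alpha k)^-1 by rewrite invfM.
  move: Hk; rewrite /Delta_q ia => Hk'.
  rewrite ?ia.
  nra.
split => //.
have := Hrun k; cbv zeta; move=> [_ [_ [_ [_ [_ [_ H4]]]]]].
by move: H4; rewrite /successful in Hsucc; rewrite Hsucc => -[].
Qed.
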